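(* Let $\alpha>\beta\geq 1$ be two real numbers such that $\alpha/\beta\notin\mathbb{N}$ and $[\alpha,\beta]\le 1$. Then $\mathcal{N}_\alpha\cap\mathcal{N}_\beta= \emptyset$.
   Context: Height: for irrational $\rho>0$, $H(\rho)=\infty$; for $\rho=a/q$ with $a,q\in\mathbb{N}$, $\gcd(a,q)=1$, $H(\rho)=\max\{a,q\}$. Bracket: $[\alpha,\beta]=H(\alpha/\beta)/\max\{\alpha,\beta\}$. $P^-(n)$ denotes the smallest prime factor of $n\in\mathbb{N}$, with $P^-(1)=\infty$. For $\alpha\ge1$, $\mathcal{N}_\alpha=\bigcup_{n\in\mathbb{N},\ P^-(n)>\alpha}(n\alpha-\tfrac12,n\alpha+\tfrac12)$. *)

(* Defs.v *)
From Stdlib Require Import Reals Lra ZArith Znumtheory ClassicalEpsilon.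
From Coquelicot Require Import Rbar.
Open Scope R_scope.

Definition reduced_rep (rho : R) (aq : nat * nat) : Prop :=
  (0 < fst aq)%nat /\ (0 < snd aq)%nat /\ Nat.gcd (fst aq) (snd aq) = 1%nat /\
  rho = INR (fst aq) / INR (snd aq).

(* Height: H(rho) = max{a,q} if rho = a/q in lowest terms, +oo if rho is irrational
   (for rho > 0, not being a positive rational means being irrational). *)
Definition height (rho : R) : Rbar :=
  match excluded_middle_informative (exists aq, reduced_rep rho aq) with
  | left h => let aq := proj1_sig (constructive_indefinite_description _ h) in
              Finite (INR (Nat.max (fst aq) (snd aq)))
  | right _ => p_infty
  end.

Definition bracket (alpha beta : R) : Rbar :=
  Rbar_div (height (alpha / beta)) (Finite (Rmax alpha beta)).

Definition is_least_prime_factor (n : nat) (p : Z) : Prop :=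
  prime p /\ (p | Z.of_nat n)%Z /\
  forall r : Z, prime r -> (r | Z.of_nat n)%Z -> (p <= r)%Z.

Definition Pminus (n : nat) : Rbar :=
  match excluded_middle_informative (exists p, is_least_prime_factor n p) with
  | left h => Finite (IZR (proj1_sig (constructive_indefinite_description _ h)))
  | right _ => p_infty
  end.

Definition N_set (alpha : R) (x : R) : Prop :=
  exists n : nat, (1 <= n)%nat /\ Rbar_lt (Finite alpha) (Pminus n) /\
    INR n * alpha - 1/2 < x /\ x < INR n * alpha + 1/2.

(* Main.v *)
Require Import Defs.
From Stdlib Require Import Reals.
From Coquelicot Require Import Rbar.
From Stdlib Require Import Lra Lia ZArith Znumtheory Classical Arith ClassicalEpsilon.
Open Scope R_scope.

Lemma prime_div_exists (k : nat) : forall z : Z, (1 < z)%Z -> (Z.to_nat z <= k)%nat ->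
  exists p, prime p /\ (p | z)%Z.
Proof.
  induction k as [|k IH]; intros z Hz Hk; [lia|].
  destruct (prime_dec z) as [Hp|Hp]; [exists z; split; auto; apply Z.divide_refl|].
  destruct (not_prime_divide z Hz Hp) as [d [Hd1 Hd2]].
  destruct (IH d) as [p [Hp1 Hp2]]; try lia.
  exists p; split; auto. eapply Z.divide_trans; eauto.
Qed.

Lemma least_exists (n : nat) (k : nat) : forall p : Z, prime p -> (p | Z.of_nat n)%Z ->
  (Z.to_nat p <= k)%nat -> exists lp, is_least_prime_factor n lp.
Proof.
  induction k as [|k IH]; intros p Hp Hd Hk.
  - destruct Hp as [Hp _]. lia.
  - destruct (classic (forall r : Z, prime r -> (r | Z.of_nat n)%Z -> (p <= r)%Z)) as [H|H0].
    + exists p. split; [exact Hp| split; [exact Hd| exact H]].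
    + apply not_all_ex_not in H0 as [r Hr].
      apply imply_to_and in Hr as [Hr1 Hr].
      apply imply_to_and in Hr as [Hr2 Hr3].
      apply (IH r Hr1 Hr2).
      destruct Hr1 as [Hr1 _]. destruct Hp as [Hp _]. lia.
Qed.

Lemma Pminus_bound (n : nat) (p : Z) (alpha : R) : prime p -> (p | Z.of_nat n)%Z ->
  Rbar_lt (Finite alpha) (Defs.Pminus n) -> alpha < IZR p.
Proof.
  intros Hp Hd H.
  destruct (least_exists n (Z.to_nat p) p Hp Hd (le_n _)) as [lp Hlp].
  unfold Defs.Pminus in H.
  destruct excluded_middle_informative as [e|e].
  - destruct (constructive_indefinite_description _ e) as [l [Hl1 [Hl2 Hl3]]].
    simpl in H. specialize (Hl3 p Hp Hd). apply IZR_le in Hl3. lra.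
  - exfalso; apply e; eauto.
Qed.

Theorem lemma2p6 (alpha beta : R) :
  1 <= beta -> beta < alpha ->
  ~ (exists n : nat, alpha / beta = INR n) ->
  Rbar_le (bracket alpha beta) (Finite 1) ->
  forall x : R, ~ (N_set alpha x /\ N_set beta x).
Proof.
  intros Hb Hab Hnint Hbr x [[n [Hn1 [Hn2 [Hn3 Hn4]]]] [m [Hm1 [Hm2 [Hm3 Hm4]]]]].
  unfold bracket, height in Hbr.
  destruct excluded_middle_informative as [e|e].
  2:{ simpl in Hbr. destruct Rle_dec as [r|r].
      - destruct Rle_lt_or_eq_dec; simpl in Hbr; [contradiction|].
        assert (0 < / Rmax alpha beta). { apply Rinv_0_lt_compat. unfold Rmax; destruct Rle_dec; lra. }
        lra.
      - apply r. left. apply Rinv_0_lt_compat. unfold Rmax; destruct Rle_dec; lra. }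
  destruct (constructive_indefinite_description _ e) as [[a q] [Ha [Hq [Hg Hr]]]].
  simpl in *.
  assert (Hmax : Rmax alpha beta = alpha) by (unfold Rmax; destruct Rle_dec; lra).
  rewrite Hmax in Hbr. simpl in Hbr.
  assert (HM : INR (Nat.max a q) <= alpha).
  { apply Rmult_le_reg_r with (/ alpha). apply Rinv_0_lt_compat; lra.
    rewrite Rinv_r by lra. exact Hbr. }
  assert (HA : INR a <= alpha) by (eapply Rle_trans; [|exact HM]; apply le_INR; lia).
  assert (HQ : INR q <= alpha) by (eapply Rle_trans; [|exact HM]; apply le_INR; lia).
  assert (Hqpos : 0 < INR q) by (apply lt_0_INR; lia).
  assert (Hrel : alpha * INR q = INR a * beta).
  { assert (alpha = alpha / beta * beta) by (field; lra).
    rewrite H, Hr. field. lra. }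
  assert (Hqb : INR q <= beta) by nra.
  assert (Hq2 : (q <> 1)%nat).
  { intro E; subst q. apply Hnint. exists a. rewrite Hr. simpl. field. }
  assert (Hlt : Rabs (INR n * alpha - INR m * beta) < 1) by (apply Rabs_def1; lra).
  destruct (Nat.eq_dec (n * a) (m * q)) as [Heq|Hneq].
  - assert (Hdiv : Nat.divide q n).
    { apply (Nat.gauss q a n).
      + exists m. lia.
      + rewrite Nat.gcd_comm. exact Hg. }
    destruct Hdiv as [c Hc].
    destruct (prime_div_exists q (Z.of_nat q)) as [p [Hp Hpd]]; try lia.
    assert (Hpn : (p | Z.of_nat n)%Z).
    { eapply Z.divide_trans; [exact Hpd|]. exists (Z.of_nat c). lia. }
    pose proof (Pminus_bound n p alpha Hp Hpn Hn2) as Hap.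
    assert (Hpq : (p <= Z.of_nat q)%Z) by (apply Z.divide_pos_le; [lia|exact Hpd]).
    apply IZR_le in Hpq. rewrite <- INR_IZR_INZ in Hpq. lra.
  - set (k := (Z.of_nat (n * a) - Z.of_nat (m * q))%Z).
    assert (Hk : INR q * (INR n * alpha - INR m * beta) = beta * IZR k).
    { unfold k. rewrite minus_IZR, <- !INR_IZR_INZ, !mult_INR.
      transitivity (INR n * (alpha * INR q) - INR m * INR q * beta); [ring| rewrite Hrel; ring]. }
    assert (Hk1 : 1 <= Rabs (IZR k)).
    { destruct (Z_lt_le_dec k 0).
      - rewrite Rabs_left by (apply IZR_lt; lia).
        assert (IZR k <= -1) by (apply IZR_le; lia). lra.
      - assert (1 <= IZR k) by (apply IZR_le; unfold k in *; lia).
        rewrite Rabs_right by lra. lra. }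
    assert (Habs : INR q * Rabs (INR n * alpha - INR m * beta) = beta * Rabs (IZR k)).
    { rewrite <- (Rabs_right (INR q)) by lra. rewrite <- Rabs_mult, Hk, Rabs_mult.
      rewrite (Rabs_right beta) by lra. reflexivity. }
    assert (0 <= Rabs (INR n * alpha - INR m * beta)) by apply Rabs_pos.
    nra.
Qed.
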